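(* For every integer $n \ge 19$ and every $d \in \{3,4,5\}$, \[ \mathcal{F}_{P_{n-d}} \le \frac{101}{100}\cdot \frac{\mathcal{F}_{P_n}}{\psi^d}. \]
   Context: $\mathcal{F}_{P_m}$ is the number of minimal forts of the path on $m$ vertices; equivalently $\mathcal{F}_{P_m}=a_m$ where $a_1=a_2=a_3=1$ and $a_m = a_{m-2}+a_{m-3}$ for $m \ge 4$. (A fort is a nonempty vertex set such that every vertex outside it has zero or at least two neighbors in it; minimal means no proper subset is a fort.) $\psi \approx 1.32472$ is the real root of $z^3 - z - 1 = 0$. *)

(* Defs.v *)
From HB Require Import structures.
From mathcomp Require Import all_boot all_order all_algebra.
From mathcomp Require Import reals.
Set Implicit Arguments. Unset Strict Implicit. Unset Printing Implicit Defensive.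

(* Number of minimal forts of the path P_m, via the recurrence given in the
   context: a_1 = a_2 = a_3 = 1, a_m = a_(m-2) + a_(m-3) for m >= 4.
   (The value at m = 0 is an irrelevant convention, never used.) *)
Fixpoint minFortsPath (m : nat) : nat :=
  match m with
  | 0 => 0
  | S m1 =>
    match m1 with
    | 0 => 1
    | S m2 =>
      match m2 with
      | 0 => 1
      | S m3 =>
        match m3 with
        | 0 => 1
        | S _ => minFortsPath m2 + minFortsPath m3
        end
      end
    end
  end.

(* Main.v *)
Require Import Defs.
From Stdlib Require Import ZArith Lia.
From HB Require Import structures.
From mathcomp Require Import all_boot all_order all_algebra.
From mathcomp Require Import reals.
From mathcomp Require Import zify ring lra.
Import Order.TTheory GRing.Theory Num.Theory.

Section ZPart.
Local Open Scope Z_scope.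

Definition cone (x y z : Z) : Prop :=
  662226507 * z <= 1000100000 * x + 122736655 * y /\
      744686279 * y <= 100000 * x + 562411984 * z /\
      999900000 * x + 122385679 * y <= 662491450 * z /\
      562147040 * z <= 100000 * x + 745037254 * y.

Lemma cone_step x y z : cone x y z -> cone y z (x + y).
Proof. unfold cone; intros; lia. Qed.

Lemma tgt x y z : 0 <= x -> cone x y z ->
  231 * x <= 100 * (x+y) /\ 305 * x <= 100 * (y+z) /\ 405 * x <= 100*(x+y+z).
Proof. unfold cone; intros; lia. Qed.

Definition A (k : nat) : Z := Z.of_nat (minFortsPath k).

Lemma recZ k : A (S (S (S (S k)))) = A (S (S k)) + A (S k).
Proof. unfold A. change (minFortsPath (S (S (S (S k))))) with
  (minFortsPath (S (S k)) + minFortsPath (S k))%nat. apply Nat2Z.inj_add. Qed.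

Lemma A_nonneg k : 0 <= A k.
Proof. unfold A; lia. Qed.

Lemma coneA j : cone (A (20 + j)) (A (S (20 + j))) (A (S (S (20 + j)))).
Proof.
induction j as [|j IH].
- unfold cone; vm_compute; repeat split; discriminate.
- replace (20 + S j)%nat with (S (20 + j)) by lia.
  replace (A (S (S (S (20 + j))))) with (A (20 + j) + A (S (20 + j))).
  + exact (cone_step _ _ _ IH).
  + replace (20 + j)%nat with (S (19 + j)) by lia. rewrite recZ. lia.
Qed.

Lemma tgtA m : (14 <= m)%nat ->
  231 * A m <= 100 * A (m+3) /\ 305 * A m <= 100 * A (m+4)
  /\ 405 * A m <= 100 * A (m+5).
Proof.
intros hm.
destruct (Nat.lt_ge_cases m 20) as [h|h].
- assert (m = 14 \/ m = 15 \/ m = 16 \/ m = 17 \/ m = 18 \/ m = 19)%nat as H by lia.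
  repeat destruct H as [H|H]; subst; vm_compute; repeat split; discriminate.
- pose proof (coneA (m - 20)) as HC.
  replace (20 + (m - 20))%nat with m in HC by lia.
  destruct (tgt _ _ _ (A_nonneg m) HC) as [h1 [h2 h3]].
  assert (e3 : A (m+3) = A m + A (S m)).
  { replace (m+3)%nat with (S (S (S (S (m-1))))) by lia. rewrite recZ.
    replace (S (S (m-1))) with (S m) by lia. replace (S (m-1)) with m by lia. lia. }
  assert (e4 : A (m+4) = A (S m) + A (S (S m))).
  { replace (m+4)%nat with (S (S (S (S m)))) by lia. rewrite recZ. lia. }
  assert (e5 : A (m+5) = A (m+3) + A (S (S m))).
  { replace (m+5)%nat with (S (S (S (S (S m))))) by lia. rewrite recZ.
    replace (S (S (S m))) with (m+3)%nat by lia. lia. }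
  lia.
Qed.

End ZPart.

Lemma tgtN m : (14 <= m)%N ->
  [/\ (231 * minFortsPath m <= 100 * minFortsPath (m+3))%N,
      (305 * minFortsPath m <= 100 * minFortsPath (m+4))%N &
      (405 * minFortsPath m <= 100 * minFortsPath (m+5))%N].
Proof.
move=> hm; have [h1 [h2 h3]] := tgtA m hm.
rewrite /A in h1 h2 h3.
split; apply/ssrnat.leP; apply Nat2Z.inj_le; rewrite !Nat2Z.inj_mul; exact.
Qed.

Local Open Scope ring_scope.

Lemma psi_pos (R : realType) (p : R) : p ^+ 3 - p - 1 = 0 -> 1 < p.
Proof.
move=> h; rewrite ltNge; apply/negP => hp.
have e : p ^+ 3 = p * p * p by rewrite !exprS expr0 mulr1 mulrA.
rewrite e in h.
case: (lerP 0 p) => h0.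
- have h2 : p * p <= 1 by nra.
  have h3 : p * p * p <= p by nra.
  lra.
- have hpp : 0 < p * p by rewrite -mulrNN; apply: mulr_gt0; lra.
  have h2 : p * p * p < 0 by rewrite pmulr_rlt0.
  have h3 : p < -1 by lra.
  have h4 : 1 < p * p by nra.
  have h5 : p * p * p < p by nra.
  lra.
Qed.

Lemma psi_ub (R : realType) (p : R) : p ^+ 3 - p - 1 = 0 -> p * 625 <= 828.
Proof.
move=> h; have h1 := @psi_pos _ _ h.
have e : p ^+ 3 = p * p * p by rewrite !exprS expr0 mulr1 mulrA.
rewrite e in h.
rewrite leNgt; apply/negP => hp.
pose c : R := 828 / 625.
have hq : c * 625 = 828 by rewrite /c divfK // pnatr_eq0.
have hc : c < p by lra.
have hc0 : 0 < c by lra.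
have hcube : c * c * c * (625 * 625 * 625) = 828 * 828 * 828 by rewrite -hq; ring.
have hcv : c * c * c - c - 1 > 0 by lra.
have h4 : 0 < p * p + p * c + c * c - 1 by nra.
have h5 : 0 < (p - c) * (p * p + p * c + c * c - 1) by apply: mulr_gt0; lra.
have e2 : (p - c) * (p * p + p * c + c * c - 1) = (p * p * p - p - 1) - (c * c * c - c - 1) by ring.
lra.
Qed.

Lemma fin_step (R : realType) (p x y : R) (d : nat) : 1 < p -> 0 <= x ->
  100 * p ^+ d * x <= 101 * y -> x <= (101%:R / 100%:R) * (y / p ^+ d).
Proof.
move=> hp hx h.
have hpd : 0 < p ^+ d by apply: exprn_gt0; lra.
rewrite mulrA ler_pdivlMr //.
lra.
Qed.

Theorem mainTheorem15 (R : realType) (psi : R) (hpsi : psi ^+ 3 - psi - 1 = 0)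
  (n d : nat) (hn : (19 <= n)%N) (hd : d \in [:: 3%N; 4%N; 5%N]) :
  (minFortsPath (n - d))%:R <= (101%:R / 100%:R) * ((minFortsPath n)%:R / psi ^+ d).
Proof.
have hp1 := @psi_pos _ _ hpsi.
have hub := @psi_ub _ _ hpsi.
have e3 : psi ^+ 3 = psi + 1 by lra.
have e4 : psi ^+ 4 = psi * psi + psi by rewrite exprS e3; ring.
have e3' : psi * psi * psi = psi + 1 by rewrite -e3 !exprS expr0 mulr1 mulrA.
have e5 : psi ^+ 5 = psi * psi + psi + 1 by rewrite exprS e4 mulrDr mulrA e3'; ring.
have hsq : psi * psi * 625 <= 828 * psi by nra.
have hd5 : (d <= 5)%N by move: hd; rewrite !inE => /or3P [] /eqP ->.
have hm : (14 <= n - d)%N by lia.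
have hdn : (d <= n)%N by lia.
have hx : (0 : R) <= (minFortsPath (n - d))%:R by [].
have [t3 t4 t5] := tgtN _ hm.
apply: fin_step => //.
move: hd; rewrite !inE => /or3P [] /eqP hd; subst d.
- move: t3; rewrite subnK // -(ler_nat R) !natrM => t.
  rewrite e3. nra.
- move: t4; rewrite subnK // -(ler_nat R) !natrM => t.
  rewrite e4. nra.
- move: t5; rewrite subnK // -(ler_nat R) !natrM => t.
  rewrite e5. nra.
Qed.
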